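(* The Lie algebra $\Lambda_1(\mathbb{Q}\mathrm{Par}_2)$ is generated by $x_1x_2$, $x_1^2x_2$, $x_1x_2^2$, and $x_1^3x_2+x_1x_2^3$.
   Context: The nonsymmetric operad of partitions $\mathrm{Par}$: $\mathrm{Par}((1))=\{1\}$, and for $m\ge2$, $\mathrm{Par}((m))$ is the set of monomials $\prod_{i=1}^Nx_i^{a_i}$ with $N\ge2$, all $a_i\ge1$, $\sum a_i=m$ (nontrivial order-preserving partitions of $\{1,\dots,m\}$ into consecutive blocks of sizes $a_1,\dots,a_N$). Partial composition: if $a_1+\dots+a_{l-1}+1\le s\le a_1+\dots+a_l$, then $\left(\prod_{i=1}^Nx_i^{a_i}\right)\circ_s\left(\prod_{k=1}^{N_s}x_k^{b_k}\right)=x_l^{a_l-1+\sum_kb_k}\prod_{i\ne l}x_i^{a_i}$; and $1$ is a two-sided unit. $\mathrm{Par}_2$ is the suboperad with $\mathrm{Par}_2((1))=\{1\}$ and $\mathrm{Par}_2((m))$ the monomials in $\mathrm{Par}((m))$ involving only $x_1,x_2$, i.e. $x_1^ax_2^b$ with $a,b\ge1$, $a+b=m$. $\Lambda_1(\mathbb{Q}\mathrm{Par}_2)=\bigoplus_{m\ge2}\mathbb{Q}\mathrm{Par}_2((m))$ with Lie bracket $[c,d]=\sum_{t=1}^{j}d\circ_tc-\sum_{s=1}^{k}c\circ_sd$ for $c\in\mathrm{Par}_2((k))$, $d\in\mathrm{Par}_2((j))$, extended bilinearly. *)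

(* Defs.v *)
From mathcomp Require Import all_boot all_algebra.
From mathcomp Require Import mpoly.
Set Implicit Arguments. Unset Strict Implicit. Unset Printing Implicit Defensive.
Import GRing.Theory.
Local Open Scope ring_scope.

(* Elements of Q Par_2 of arity >= 2 are modelled as bivariate polynomials
   over rat: the basis monomial x_1^a x_2^b (a,b >= 1) is 'X_0^+a * 'X_1^+b. *)
Definition x1 : {mpoly rat[2]} := 'X_(@Ordinal 2 0 isT).
Definition x2 : {mpoly rat[2]} := 'X_(@Ordinal 2 1 isT).

Definition par2mon (ab : nat * nat) : {mpoly rat[2]} := x1 ^+ ab.1 * x2 ^+ ab.2.

Definition expo (m : 'X_{1..2}) : nat * nat :=
  (m (@Ordinal 2 0 isT), m (@Ordinal 2 1 isT)).

(* Partial composition in Par_2: (x1^a x2^b) o_s (x1^c x2^d), 1 <= s <= a+b. *)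
Definition comp_par2 (ab : nat * nat) (s : nat) (cd : nat * nat) : nat * nat :=
  if (s <= ab.1)%N then ((ab.1 - 1 + (cd.1 + cd.2))%N, ab.2)
  else (ab.1, (ab.2 - 1 + (cd.1 + cd.2))%N).

Definition arity (ab : nat * nat) : nat := (ab.1 + ab.2)%N.

Definition bracket_mon (c d : nat * nat) : {mpoly rat[2]} :=
  \sum_(1 <= t < (arity d).+1) par2mon (comp_par2 d t c)
  - \sum_(1 <= s < (arity c).+1) par2mon (comp_par2 c s d).

Definition bracket (p q : {mpoly rat[2]}) : {mpoly rat[2]} :=
  \sum_(m <- msupp p) \sum_(n <- msupp q)
     (p@_m * q@_n) *: bracket_mon (expo m) (expo n).

Definition in_Lambda1Par2 (p : {mpoly rat[2]}) : Prop :=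
  forall m, m \in msupp p -> (0 < (expo m).1)%N /\ (0 < (expo m).2)%N.

Inductive lie_gen (S : {mpoly rat[2]} -> Prop) : {mpoly rat[2]} -> Prop :=
  | lie_gen_in p : S p -> lie_gen S p
  | lie_gen_0 : lie_gen S 0
  | lie_gen_add p q : lie_gen S p -> lie_gen S q -> lie_gen S (p + q)
  | lie_gen_scale (c : rat) p : lie_gen S p -> lie_gen S (c *: p)
  | lie_gen_br p q : lie_gen S p -> lie_gen S q -> lie_gen S (bracket p q).

Definition gens6p1 (p : {mpoly rat[2]}) : Prop :=
  p = par2mon (1, 1)%N \/ p = par2mon (2, 1)%N \/ p = par2mon (1, 2)%N \/
  p = par2mon (3, 1)%N + par2mon (1, 3)%N.

(* Main.v *)
Require Import Defs.
From mathcomp Require Import all_boot all_algebra.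
From mathcomp Require Import mpoly.
From mathcomp Require Import ring lra zify.
Set Warnings "-notation-overridden,-ambiguous-paths,-notation-incompatible-prefix".
Set Implicit Arguments. Unset Strict Implicit. Unset Printing Implicit Defensive.
Import GRing.Theory Num.Theory.
Local Open Scope ring_scope.

Definition o0 : 'I_2 := @Ordinal 2 0 isT.
Definition o1 : 'I_2 := @Ordinal 2 1 isT.
Definition mnm2 (a b : nat) : 'X_{1..2} := (U_(o0) *+ a + U_(o1) *+ b)%MM.

Lemma parX c : par2mon c = 'X_[mnm2 c.1 c.2].
Proof. by rewrite /par2mon /mnm2 mpolyXD -!mpolyXn. Qed.

Lemma expoK a b : expo (mnm2 a b) = (a, b).
Proof.
rewrite /expo /mnm2 !mnmDE !mulmnE !mnm1E /=. by rewrite !mul1n !mul0n addn0.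
Qed.

Lemma bracket_par c d : bracket (par2mon c) (par2mon d) = bracket_mon c d.
Proof.
rewrite /bracket !parX !msuppX !big_seq1 !mcoeffX !eqxx mul1r scale1r !expoK.
by case: c; case: d.
Qed.

Lemma sum_comp (e f : nat) (c : nat * nat) :
  \sum_(1 <= t < (arity (e, f)).+1) par2mon (comp_par2 (e, f) t c) =
  par2mon ((e - 1 + (c.1 + c.2))%N, f) *+ e + par2mon (e, (f - 1 + (c.1 + c.2))%N) *+ f.
Proof.
rewrite /arity /= (big_cat_nat _ (n := e.+1)) //=; last by rewrite ltnS leq_addr.
congr (_ + _).
  rewrite (eq_big_nat _ _ (F2 := fun _ => par2mon ((e - 1 + (c.1 + c.2))%N, f))).
    by rewrite sumr_const_nat subSS subn0.
  by move=> t /andP [_ ht]; rewrite /comp_par2 /= -ltnS ht.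
rewrite (eq_big_nat _ _ (F2 := fun _ => par2mon (e, (f - 1 + (c.1 + c.2))%N))).
  by rewrite sumr_const_nat subSS addKn.
by move=> t /andP [ht _]; rewrite /comp_par2 /= leqNgt ht.
Qed.

Lemma bmE a b e f : bracket_mon (a, b) (e, f) =
  par2mon ((e - 1 + (a + b))%N, f) *+ e + par2mon (e, (f - 1 + (a + b))%N) *+ f
  - (par2mon ((a - 1 + (e + f))%N, b) *+ a + par2mon (a, (b - 1 + (e + f))%N) *+ b).
Proof. by rewrite /bracket_mon !sum_comp. Qed.

Notation G := (lie_gen gens6p1).
Notation M a b := (par2mon (a%N, b%N)).

Lemma G_add p q : G p -> G q -> G (p + q). Proof. exact: lie_gen_add. Qed.
Lemma G_scale c p : G p -> G (c *: p). Proof. exact: lie_gen_scale. Qed.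
Lemma G_opp p : G p -> G (- p).
Proof. by move=> h; rewrite -scaleN1r; apply: G_scale. Qed.
Lemma G_sub p q : G p -> G q -> G (p - q).
Proof. by move=> hp hq; apply: G_add => //; apply: G_opp. Qed.
Lemma G_nat p n : G p -> G (p *+ n).
Proof. by move=> h; rewrite -scaler_nat; apply: G_scale. Qed.
Lemma G_natinv p n : (0 < n)%N -> G (p *+ n) -> G p.
Proof.
move=> hn h; have -> : p = (n%:R : rat)^-1 *: (p *+ n).
  by rewrite -scaler_nat scalerA mulVf ?scale1r // pnatr_eq0 -lt0n.
exact: G_scale.
Qed.

Lemma G_br' a b e f p1 q1 p2 q2 p3 q3 p4 q4 :
  G (M a b) -> G (M e f) ->
  p1 = (e - 1 + (a + b))%N -> q1 = f -> p2 = e -> q2 = (f - 1 + (a + b))%N ->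
  p3 = (a - 1 + (e + f))%N -> q3 = b -> p4 = a -> q4 = (b - 1 + (e + f))%N ->
  G (M p1 q1 *+ e + M p2 q2 *+ f - (M p3 q3 *+ a + M p4 q4 *+ b)).
Proof.
move=> ha he -> -> -> -> -> -> -> ->; rewrite -bmE -bracket_par.
exact: lie_gen_br.
Qed.

Tactic Notation "brk" uconstr(a) uconstr(b) uconstr(e) uconstr(f) uconstr(p1) uconstr(q1) uconstr(p2) uconstr(q2) uconstr(p3) uconstr(q3) uconstr(p4) uconstr(q4) :=
  have := @G_br' a b e f p1 q1 p2 q2 p3 q3 p4 q4;
  let h := fresh in move=> h; move: h => /(_ _ _ ltac:(lia) ltac:(lia) ltac:(lia)
     ltac:(lia) ltac:(lia) ltac:(lia) ltac:(lia) ltac:(lia)).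

Local Open Scope nat_scope.

Lemma boundary k :
  (forall a b, (0 < a)%N -> (0 < b)%N -> (a + b <= k.+4)%N -> G (M a b)) ->
  G (M 1 k.+4) /\ G (M k.+4 1).
Proof.
move=> IH.
have I a b : (0 < a)%N -> (0 < b)%N -> (a + b <= k.+4)%N -> G (M a b) by exact: IH.
brk 1 1 1 k.+3 2 k.+3 1 k.+4 k.+4 1 1 k.+4 => /(_ ltac:(apply: I; lia) ltac:(apply: I; lia)) X1.
brk 1 1 2 k.+2 3 k.+2 2 k.+3 k.+4 1 1 k.+4 => /(_ ltac:(apply: I; lia) ltac:(apply: I; lia)) X2.
brk 1 1 k.+3 1 k.+4 1 k.+3 2 k.+4 1 1 k.+4 => /(_ ltac:(apply: I; lia) ltac:(apply: I; lia)) Xm1.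
brk 1 1 k.+2 2 k.+3 2 k.+2 3 k.+4 1 1 k.+4 => /(_ ltac:(apply: I; lia) ltac:(apply: I; lia)) Xm2.
brk 1 2 1 k.+2 3 k.+2 1 k.+4 k.+3 2 1 k.+4 => /(_ ltac:(apply: I; lia) ltac:(apply: I; lia)) Y11.
brk 2 1 1 k.+2 3 k.+2 1 k.+4 k.+4 1 2 k.+3 => /(_ ltac:(apply: I; lia) ltac:(apply: I; lia)) Y12.
brk 1 2 k.+2 1 k.+4 1 k.+2 3 k.+3 2 1 k.+4 => /(_ ltac:(apply: I; lia) ltac:(apply: I; lia)) Y21.
brk 2 1 k.+2 1 k.+4 1 k.+2 3 k.+4 1 2 k.+3 => /(_ ltac:(apply: I; lia) ltac:(apply: I; lia)) Y22.
split.
  apply: (@G_natinv _ ((k + 5) * (k + 6) * (k + 1))%N); first by rewrite !muln_gt0 !addn_gt0 orbT.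
  set x1 := (X in G X) in X1; set x2 := (X in G X) in X2; set x3 := (X in G X) in Xm1;
  set y1 := (X in G X) in Y11; set y2 := (X in G X) in Y12.
  have -> : (M 1 k.+4 *+ ((k + 5) * (k + 6) * (k + 1)))%R =
    (x1 *+ (k * k + 8 * k + 13) - x2 *+ (k + 5) + x3 *+ (k + 7) + y1 *+ (k + 7) + y2 *+ (k + 3))%R.
    rewrite /x1 /x2 /x3 /y1 /y2; ring.
  by clearbody x1 x2 x3 y1 y2; repeat (apply: G_sub || apply: G_add || apply: G_opp || apply: G_nat).
apply: (@G_natinv _ ((k + 5) * (k + 6) * (k + 1))%N); first by rewrite !muln_gt0 !addn_gt0 orbT.
set x1 := (X in G X) in Xm1; set x2 := (X in G X) in Xm2; set x3 := (X in G X) in X1;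
set y1 := (X in G X) in Y22; set y2 := (X in G X) in Y21.
have -> : (M k.+4 1 *+ ((k + 5) * (k + 6) * (k + 1)))%R =
  (x1 *+ (k * k + 8 * k + 13) - x2 *+ (k + 5) + x3 *+ (k + 7) + y1 *+ (k + 7) + y2 *+ (k + 3))%R.
  rewrite /x1 /x2 /x3 /y1 /y2; ring.
by clearbody x1 x2 x3 y1 y2; repeat (apply: G_sub || apply: G_add || apply: G_opp || apply: G_nat).
Qed.

Lemma chain m :
  (forall a b, 0 < a -> 0 < b -> a + b <= m -> G (M a b)) ->
  G (M 1 m) -> G (M m 1) -> forall a, 0 < a -> a <= m -> G (M a (m.+1 - a)).
Proof.
move=> I hl hr; elim=> // a IHa _ ham.
case: (posnP a) => [-> | apos]; first by rewrite subSS subn0.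
have Ha := IHa apos (ltnW ham).
have hm : 1 < m by lia.
brk 1 1 a (m - a) a.+1 (m - a) a (m.+1 - a) m 1 1 m => /(_ ltac:(apply: I; lia) ltac:(apply: I; lia)) X.
rewrite subSS; apply: (@G_natinv _ a apos).
set x := (X in G X) in X.
have -> : (M a.+1 (m - a) *+ a = x - M a (m.+1 - a) *+ (m - a) + (M m 1 *+ 1 + M 1 m *+ 1))%R.
  rewrite /x; ring.
clearbody x.
by repeat (apply: G_sub || apply: G_add || apply: G_opp || apply: G_nat).
Qed.

Lemma small a b : 0 < a -> 0 < b -> a + b <= 3 -> G (M a b).
Proof.
move=> ha hb hab; apply: lie_gen_in; rewrite /gens6p1.
case: a ha hab => [|[|[|a]]] // _; case: b hb => [|[|[|b]]] //; try lia; auto.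
Qed.

Lemma boundary4 :
  (forall a b, 0 < a -> 0 < b -> a + b <= 3 -> G (M a b)) ->
  G (M 1 3) /\ G (M 3 1).
Proof.
move=> I.
brk 1 1 1 2 2 2 1 3 3 1 1 3 => /(_ ltac:(apply: I; lia) ltac:(apply: I; lia)) X1.
brk 1 1 2 1 3 1 2 2 3 1 1 3 => /(_ ltac:(apply: I; lia) ltac:(apply: I; lia)) X2.
have g : G (M 3 1 + M 1 3)%R by apply: lie_gen_in; rewrite /gens6p1; auto.
set x1 := (X in G X) in X1; set x2 := (X in G X) in X2; set y := (X in G X) in g.
split; apply: (@G_natinv _ 4) => //.
  have -> : (M 1 3 *+ 4 = x1 - x2 + y *+ 2)%R by rewrite /x1 /x2 /y; ring.
  by clearbody x1 x2 y; repeat (apply: G_sub || apply: G_add || apply: G_opp || apply: G_nat).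
have -> : (M 3 1 *+ 4 = x2 - x1 + y *+ 2)%R by rewrite /x1 /x2 /y; ring.
by clearbody x1 x2 y; repeat (apply: G_sub || apply: G_add || apply: G_opp || apply: G_nat).
Qed.

Lemma all_arity n : forall a b, 0 < a -> 0 < b -> a + b <= n -> G (M a b).
Proof.
elim: n => [|n IH] a b ha hb hab; first lia.
case: (leqP (a + b) n) => hn; first exact: IH.
case: (leqP n.+1 3) => h3; first by apply: small; lia.
have hb' : b = n.+1 - a by lia.
rewrite hb'.
have [hl hr] : G (M 1 n) /\ G (M n 1).
  case: n IH hn h3 {hb' hab} => [|[|[|[|k]]]] IH hn h3 //.
    exact: boundary4.
  exact: boundary.
by apply: chain => //; lia.
Qed.

Lemma mnm2K (m : 'X_{1..2}) : mnm2 (m o0) (m o1) = m.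
Proof.
apply/mnmP => i; rewrite /mnm2 mnmDE !mulmnE !mnm1E.
by case: i => [[|[|i]] hi] //=; rewrite ?mul1n ?mul0n ?addn0 //; congr (m _); apply: val_inj.
Qed.

Theorem theorem6p1 :
  forall p : {mpoly rat[2]}, in_Lambda1Par2 p -> lie_gen gens6p1 p.
Proof.
move=> p hp; rewrite (mpolyE p) big_seq.
apply: (big_ind (fun q => G q)); [exact: lie_gen_0 | exact: G_add |].
move=> m hm; apply: G_scale.
have [h1 h2] := hp m hm.
rewrite -(mnm2K m) -[mnm2 _ _]/(mnm2 (m o0, m o1).1 (m o0, m o1).2) -parX.
by apply: (all_arity (n := m o0 + m o1)).
Qed.
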